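(* Assume $\gamma\ge1$. Then $$\log\frac{\det(\underline V_{i,t}^{-1})}{\det(\Lambda^0_{i,t})}\le2d\log\Big\{\frac{3k(k+1)}{8}+\gamma k+2\lambda e_k\Big\}.$$
   Context: $d,k\ge1$, $i+t-1\le k$. $C_{j,u}=[1,0_{j-1}^\top,1,0_{k-j+u-1}^\top,1,0_{k-u}^\top]\otimes I_d\in\mathbb R^{d\times(2k+1)d}$. $V_{0,k}=\mathrm{diag}(\gamma I_d,\gamma I_{kd}+\lambda L_{\rm user}\otimes I_d,\gamma I_{kd}+\lambda L_{\rm time}\otimes I_d)$ with $\lambda\ge0$, where $L_{\rm user},L_{\rm time}$ are the Laplacians ($L=QQ^\top$, $Q$ signed incidence matrix) of a user graph and a time graph on $k$ vertices each, and $e_k$ is the total number of edges of the two graphs. Pairs are ordered $(1,1),(1,2),(2,1),(1,3),(2,2),(3,1),\dots$ and $\mathcal O_{i,t}$ is the set of pairs strictly before $(i,t)$ (all with $j+u-1\le k$). For $(j,u)\in\mathcal O_{i,t}$: $x_{j,u}\in\mathbb R^d$ with $\|x_{j,u}\|\le1$, $\phi_{j,u}=C_{j,u}^\top x_{j,u}$, $\tilde\sigma^2_{j,u}=\pi_{j,u}(1-\pi_{j,u})$ with $\pi_{j,u}\in(0,1)$. $V_{i,t}=V_{0,k}+\sum_{(j,u)\in\mathcal O_{i,t}}\tilde\sigma^2_{j,u}\phi_{j,u}\phi_{j,u}^\top$, $\underline V_{i,t}=(C_{i,t}V_{i,t}^{-1}C_{i,t}^\top)^{-1}$, $\Lambda^0_{i,t}=C_{i,t}V_{i,t}^{-1}V_{0,k}V_{i,t}^{-1}C_{i,t}^\top$.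 *)

(* Defs.v *)
From HB Require Import structures.
From mathcomp Require Import all_boot all_order all_algebra.
From mathcomp Require Import reals exp.
From mathcomp Require Export mxtens.
Set Implicit Arguments. Unset Strict Implicit. Unset Printing Implicit Defensive.
Import Order.TTheory GRing.Theory Num.Theory.
Local Open Scope ring_scope.

Section Defs.
Variable R : realType.

(* A simple undirected graph on the vertex set {1..k} (encoded as 'I_k) is
   given by its edge set E, each edge (a,b) stored once with a < b
   (this fixes the orientation used in the signed incidence matrix). *)
Definition simple_edges (k : nat) (E : {set 'I_k * 'I_k}) : Prop :=
  forall p, p \in E -> (p.1 < p.2)%N.

Definition incidence (k : nat) (E : {set 'I_k * 'I_k}) : 'M[R]_(k, #|E|) :=
  \matrix_(v < k, m < #|E|)
    let p := enum_val m in
    if v == p.1 then 1 else if v == p.2 then -1 else 0.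

Definition laplacian (k : nat) (E : {set 'I_k * 'I_k}) : 'M[R]_k :=
  incidence E *m (incidence E)^T.

(* unit row vector of R^k with a 1 at the (1-based) position j *)
Definition unitrow (k j : nat) : 'rV[R]_k := \row_(a < k) (a.+1 == j)%:R.

(* C_{j,u} = [1, 0_{j-1}, 1, 0_{k-j+u-1}, 1, 0_{k-u}] (x) I_d,
   a d x (2k+1)d matrix; the length-(2k+1) row is indexed by 1 + (k + k). *)
Definition Cmat (d k j u : nat) : 'M[R]_(d, (1 + (k + k)) * d) :=
  castmx (mul1n d, erefl _)
    ((row_mx (1 : 'rV[R]_1) (row_mx (unitrow k j) (unitrow k u)))
       *t (1%:M : 'M[R]_d)).

(* V_{0,k} = diag(g I_d, g I_{kd} + l L_user (x) I_d, g I_{kd} + l L_time (x) I_d)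
   = diag(g, g I_k + l L_user, g I_k + l L_time) (x) I_d *)
Definition V0 (d k : nat) (g l : R) (Eu Et : {set 'I_k * 'I_k}) :
  'M[R]_((1 + (k + k)) * d) :=
  (block_mx (g%:M : 'M[R]_1) 0 0
     (block_mx (g%:M + l *: laplacian Eu) 0 0 (g%:M + l *: laplacian Et)))
  *t (1%:M : 'M[R]_d).

(* the ordering (1,1),(1,2),(2,1),(1,3),(2,2),(3,1),... : (j,u) strictly
   precedes (i,t) (all indices >= 1) *)
Definition precedes (j u i t : nat) : bool :=
  [&& (0 < j)%N, (0 < u)%N &
      ((j + u < i + t)%N || ((j + u == i + t) && (j < i)%N))].

Definition phi (d k j u : nat) (x : 'cV[R]_d) : 'cV[R]_((1 + (k + k)) * d) :=
  (Cmat d k j u)^T *m x.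

(* V_{i,t} = V_{0,k} + sum_{(j,u) in O_{i,t}} sigma^2_{j,u} phi phi^T,
   sigma^2_{j,u} = pi_{j,u}(1 - pi_{j,u}).  Pairs in O_{i,t} satisfy
   j + u <= i + t <= k + 1, so j,u range over 0..k. *)
Definition Vit (d k : nat) (g l : R) (Eu Et : {set 'I_k * 'I_k})
  (x : nat -> nat -> 'cV[R]_d) (pi : nat -> nat -> R) (i t : nat) :
  'M[R]_((1 + (k + k)) * d) :=
  V0 d g l Eu Et +
  \sum_(j < k.+1) \sum_(u < k.+1 | precedes j u i t)
     (pi j u * (1 - pi j u)) *: (phi k j u (x j u) *m (phi k j u (x j u))^T).

Definition Vund (d k : nat) (g l : R) (Eu Et : {set 'I_k * 'I_k})
  (x : nat -> nat -> 'cV[R]_d) (pi : nat -> nat -> R) (i t : nat) : 'M[R]_d :=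
  invmx (Cmat d k i t *m invmx (Vit g l Eu Et x pi i t) *m (Cmat d k i t)^T).

Definition Lambda0 (d k : nat) (g l : R) (Eu Et : {set 'I_k * 'I_k})
  (x : nat -> nat -> 'cV[R]_d) (pi : nat -> nat -> R) (i t : nat) : 'M[R]_d :=
  Cmat d k i t *m invmx (Vit g l Eu Et x pi i t) *m V0 d g l Eu Et
    *m invmx (Vit g l Eu Et x pi i t) *m (Cmat d k i t)^T.

Definition sqnorm (d : nat) (v : 'cV[R]_d) : R := \sum_(a < d) v a 0 ^+ 2.

End Defs.

(* Main.v *)
Require Import Defs.
From HB Require Import structures.
From mathcomp Require Import all_boot all_order all_algebra.
From mathcomp Require Import reals exp.
From mathcomp Require Import ring lra zify.
Import Order.TTheory GRing.Theory Num.Theory.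
Local Open Scope ring_scope.
Set Implicit Arguments. Unset Strict Implicit.



Definition sqn {R : realType} n (w : 'rV[R]_n) : R := (w *m w^T) 0 0.
Definition qf {R : realType} n (A : 'M[R]_n) (v : 'rV[R]_n) : R :=
  (v *m A *m v^T) 0 0.

Lemma sqnE {R : realType} n (w : 'rV[R]_n) : sqn w = \sum_i w 0 i ^+ 2.
Proof. by rewrite /sqn mxE; apply: eq_bigr => j _; rewrite mxE expr2. Qed.

Lemma sqn_ge0 {R : realType} n (w : 'rV[R]_n) : 0 <= sqn w.
Proof. by rewrite sqnE; apply: sumr_ge0 => i _; apply: sqr_ge0. Qed.

Lemma sqn_eq0 {R : realType} n (w : 'rV[R]_n) : sqn w = 0 -> w = 0.
Proof.
rewrite sqnE => H; apply/matrixP => i j; rewrite [i]ord1 mxE.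
have := psumr_eq0P (fun i _ => sqr_ge0 (w 0 i)) H (i := j) isT.
by move/eqP; rewrite sqrf_eq0 => /eqP.
Qed.

Lemma sqn_gt0 {R : realType} n (w : 'rV[R]_n) : w != 0 -> 0 < sqn w.
Proof.
move=> nz; rewrite lt_def sqn_ge0 andbT; apply/eqP => /sqn_eq0 h.
by rewrite h eqxx in nz.
Qed.

Lemma qfD {R : realType} n (A B : 'M[R]_n) v : qf (A + B) v = qf A v + qf B v.
Proof. by rewrite /qf mulmxDr mulmxDl mxE. Qed.

Lemma qfZ {R : realType} n (c : R) (A : 'M[R]_n) v : qf (c *: A) v = c * qf A v.
Proof. by rewrite /qf -scalemxAr -scalemxAl mxE. Qed.

Lemma qfN {R : realType} n (A : 'M[R]_n) v : qf (- A) v = - qf A v.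
Proof. by rewrite -scaleN1r qfZ mulN1r. Qed.

Lemma qf0 {R : realType} n (v : 'rV[R]_n) : qf 0 v = 0.
Proof. by rewrite /qf mulmx0 mul0mx mxE. Qed.

Lemma qf_sum {R : realType} n (I : finType) (P : pred I) (F : I -> 'M[R]_n) v :
  qf (\sum_(i | P i) F i) v = \sum_(i | P i) qf (F i) v.
Proof.
elim/big_rec2: _ => [|i y M _ <-]; first by rewrite qf0.
by rewrite qfD.
Qed.

Lemma qf_congr {R : realType} m n (P : 'M[R]_(m, n)) (A : 'M[R]_n) z :
  qf (P *m A *m P^T) z = qf A (z *m P).
Proof. by rewrite /qf trmx_mul !mulmxA. Qed.

Lemma qf_gram {R : realType} m n (P : 'M[R]_(m, n)) z :
  qf (P *m P^T) z = sqn (z *m P).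
Proof. by rewrite /sqn /qf trmx_mul !mulmxA. Qed.

Lemma qf_scalar {R : realType} n (a : R) (v : 'rV[R]_n) : qf a%:M v = a * sqn v.
Proof. by rewrite /qf mul_mx_scalar -scalemxAl mxE. Qed.

Lemma qf1 {R : realType} n (v : 'rV[R]_n) : qf 1%:M v = sqn v.
Proof. by rewrite qf_scalar mul1r. Qed.

Lemma qf_block_diag {R : realType} m n (A : 'M[R]_m) (D : 'M[R]_n) p q :
  qf (block_mx A 0 0 D) (row_mx p q) = qf A p + qf D q.
Proof.
rewrite /qf mul_row_block !mulmx0 addr0 add0r tr_row_mx mul_row_col.
by rewrite mxE.
Qed.

Lemma sqn11 {R : realType} (p : 'rV[R]_1) : sqn p = p 0 0 ^+ 2.
Proof. by rewrite sqnE big_ord1. Qed.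



Lemma schur_fact {R : realType} n (X : 'M[R]_(1 + n)) (a : R) :
  X^T = X -> a = ulsubmx X 0 0 -> a != 0 ->
  X = block_mx 1%:M 0 (a^-1 *: (ursubmx X)^T) 1%:M
      *m block_mx a%:M 0 0 (drsubmx X - a^-1 *: ((ursubmx X)^T *m ursubmx X))
      *m (block_mx 1%:M 0 (a^-1 *: (ursubmx X)^T) 1%:M)^T.
Proof.
move=> sX ea a0.
have hdl : dlsubmx X = (ursubmx X)^T by rewrite trmx_ursub sX.
have hul : ulsubmx X = a%:M by rewrite ea -mx11_scalar.
set b := ursubmx X; set D := drsubmx X.
have tb : (a^-1 *: b^T)^T = a^-1 *: b by rewrite linearZ /= trmxK.
rewrite tr_block_mx !trmx1 trmx0 tb.
rewrite !mulmx_block ?mul1mx ?mul0mx ?mulmx0 ?mulmx1 ?addr0 ?add0r ?mul1mx.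
have e1 : a^-1 *: b^T *m a%:M = b^T.
  by rewrite mul_mx_scalar scalerA mulfV // scale1r.
have e2 : a%:M *m (a^-1 *: b) = b.
  by rewrite mul_scalar_mx scalerA mulfV // scale1r.
rewrite e1 e2 -scalemxAr addrC subrK -hdl -hul.
exact: (esym (submxK X)).
Qed.

Lemma qf_first {R : realType} n (X : 'M[R]_(1 + n)) :
  qf X (row_mx 1%:M 0) = ulsubmx X 0 0.
Proof.
rewrite /qf -[X]submxK mul_row_block !mul0mx !addr0 !mul1mx tr_row_mx trmx1 trmx0.
by rewrite mul_row_col mulmx0 addr0 mulmx1 submxK.
Qed.

Lemma qf_schur {R : realType} n (X : 'M[R]_(1 + n)) (a : R) s v :
  X^T = X -> a = ulsubmx X 0 0 -> a != 0 ->
  qf X (row_mx s v) =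
  a * ((s + v *m (a^-1 *: (ursubmx X)^T)) 0 0) ^+ 2
  + qf (drsubmx X - a^-1 *: ((ursubmx X)^T *m ursubmx X)) v.
Proof.
move=> sX ea a0; rewrite {1}(schur_fact sX ea a0) qf_congr mul_row_block.
by rewrite mulmx1 !mulmx0 add0r mulmx1 qf_block_diag qf_scalar sqn11.
Qed.

Lemma det_mono {R : realType} n (X Y : 'M[R]_n) :
  X^T = X -> Y^T = Y -> (forall v, v != 0 -> 0 < qf X v) ->
  (forall v, qf X v <= qf Y v) -> 0 < \det X <= \det Y.
Proof.
elim: n X Y => [|n IH] X Y.
  by move=> *; rewrite !det_mx00 ltr01 lexx.
change 'M[R]_(1 + n) in X, Y.
move=> sX sY pX le.
set aX := ulsubmx X 0 0; set aY := ulsubmx Y 0 0.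
have v1nz : row_mx (1%:M : 'M[R]_1) (0 : 'rV[R]_n) != 0.
  rewrite row_mx_eq0 negb_and; apply/orP; left; apply/eqP => /matrixP /(_ 0 0).
  by rewrite !mxE /= => /eqP; rewrite oner_eq0.
have aX0 : 0 < aX by rewrite /aX -qf_first; apply: pX.
have aXY : aX <= aY by rewrite /aX /aY -!qf_first.
have aY0 : 0 < aY by apply: lt_le_trans aXY.
have aXn : aX != 0 by rewrite gt_eqF.
have aYn : aY != 0 by rewrite gt_eqF.
set SX := drsubmx X - aX^-1 *: ((ursubmx X)^T *m ursubmx X).
set SY := drsubmx Y - aY^-1 *: ((ursubmx Y)^T *m ursubmx Y).
have hX s v := qf_schur s v sX (erefl aX) aXn.
have hY s v := qf_schur s v sY (erefl aY) aYn.
have sSX : SX^T = SX.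
  rewrite /SX linearB linearZ /= trmx_mul trmxK trmx_drsub sX //.
have sSY : SY^T = SY.
  rewrite /SY linearB linearZ /= trmx_mul trmxK trmx_drsub sY //.
have pSX : forall v, v != 0 -> 0 < qf SX v.
  move=> v vnz.
  have := pX (row_mx (- (v *m (aX^-1 *: (ursubmx X)^T))) v).
  rewrite hX addNr mxE expr0n /= mulr0 add0r; apply.
  apply/eqP => h; move/eqP: vnz; apply; have := congr1 (@rsubmx R 1 1 n) h.
  by rewrite row_mxKr => ->; apply/matrixP => i j; rewrite !mxE.
have leS : forall v, qf SX v <= qf SY v.
  move=> v.
  have := le (row_mx (- (v *m (aY^-1 *: (ursubmx Y)^T))) v).
  rewrite hY addNr mxE expr0n /= mulr0 add0r hX; apply: le_trans.
  by rewrite lerDr mulr_ge0 ?sqr_ge0 // ltW.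
have [d0 dle] := andP (IH SX SY sSX sSY pSX leS).
have dX : \det X = aX * \det SX.
  rewrite {1}(schur_fact sX (erefl aX) aXn) !det_mulmx det_tr det_lblock.
  by rewrite det_ublock !det1 det_scalar1 !mul1r mulr1.
have dY : \det Y = aY * \det SY.
  rewrite {1}(schur_fact sY (erefl aY) aYn) !det_mulmx det_tr det_lblock.
  by rewrite det_ublock !det1 det_scalar1 !mul1r mulr1.
rewrite dX dY mulr_gt0 //=.
by rewrite ler_pM // ltW.
Qed.

Lemma dotC {R : realType} n (u w : 'rV[R]_n) : (u *m w^T) 0 0 = (w *m u^T) 0 0.
Proof. by rewrite -[u *m w^T]trmxK trmx_mul trmxK mxE. Qed.

Lemma cauchy_schwarz {R : realType} n (u w : 'rV[R]_n) :
  ((u *m w^T) 0 0) ^+ 2 <= sqn u * sqn w.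
Proof.
set a := sqn u; set b := (u *m w^T) 0 0; set c := sqn w.
have h : sqn (a *: w - b *: u) = a * (a * c - b ^+ 2).
  have e : (w *m u^T) 0 0 = b by rewrite dotC.
  rewrite /sqn linearB !linearZ /= mulmxDl !mulmxDr -!scalemxAl -!scalemxAr.
  rewrite !mulNmx !mulmxN.
  move: e; rewrite /a /b /c /sqn.
  set p1 := w *m w^T; set p2 := w *m u^T; set p3 := u *m w^T; set p4 := u *m u^T.
  move=> e; rewrite !mxE; move: e; rewrite !mxE => ->.
  move: (\sum_j u 0 j * u^T j 0) (\sum_j u 0 j * w^T j 0) (\sum_j w 0 j * w^T j 0).
  move=> x y z; ring.
have a0 : 0 <= a by apply: sqn_ge0.
have := sqn_ge0 (a *: w - b *: u); rewrite h.
have [a_0|anz] := eqVneq a 0.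
  move=> _; have u0 : u = 0 by apply: sqn_eq0.
  by rewrite /b u0 mul0mx mxE expr0n /= a_0 mul0r.
have ap : 0 < a by rewrite lt_def anz a0.
by rewrite pmulr_rge0 // subr_ge0 mulrC.
Qed.

Lemma main_abstract {R : realType} n d (V0 M : 'M[R]_n) (C : 'M[R]_(d, n)) (S : R) :
  V0^T = V0 -> M^T = M ->
  (forall y, sqn y <= qf V0 y) ->
  (forall y, 0 <= qf M y) ->
  (forall y, qf M y <= (S - 1) * sqn y) -> 1 <= S ->
  (forall w : 'rV[R]_d, w *m C = 0 -> w = 0) ->
  0 < \det (C *m invmx (V0 + M) *m C^T) /\
  \det (C *m invmx (V0 + M) *m C^T)
    <= S ^+ d * \det (C *m invmx (V0 + M) *m V0 *m invmx (V0 + M) *m C^T).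
Proof.
move=> sV0 sM V0ge Mge0 Mle S1 Cinj.
set V := V0 + M; set W := invmx V.
have sV : V^T = V by rewrite /V linearD /= sV0 sM.
have qV y : qf V y = qf V0 y + qf M y by rewrite /V qfD.
have pV : forall y, y != 0 -> 0 < qf V y.
  move=> y ynz; rewrite qV; apply: (lt_le_trans (sqn_gt0 ynz)).
  by apply: le_trans (V0ge y) _; rewrite lerDl.
have [dV _] := andP (det_mono sV sV pV (fun v => lexx _)).
have uV : V \in unitmx by rewrite unitmxE unitfE gt_eqF.
have sW : W^T = W by rewrite /W trmx_inv sV.
have WV : W *m V = 1%:M by rewrite /W mulVmx.
set A := C *m W *m C^T; set B := C *m W *m V0 *m W *m C^T.
have eA : A = (C *m W) *m V *m (C *m W)^T.
  by rewrite trmx_mul sW /A -!mulmxA (mulmxA W V) WV mul1mx.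
have eB : B = (C *m W) *m V0 *m (C *m W)^T.
  by rewrite trmx_mul sW /B !mulmxA.
have sA : A^T = A by rewrite /A !trmx_mul trmxK sW mulmxA.
have sB : B^T = B by rewrite /B !trmx_mul trmxK sW sV0 !mulmxA.
have sSB : (S *: B)^T = S *: B by rewrite linearZ /= sB.
have pA : forall w, w != 0 -> 0 < qf A w.
  move=> w wnz; rewrite eA qf_congr; apply: pV.
  apply: contra wnz => /eqP y0; apply/eqP; apply: Cinj.
  by rewrite -[w *m C]mulmx1 -WV mulmxA -(mulmxA w) y0 mul0mx.
have leAB : forall w, qf A w <= qf (S *: B) w.
  move=> w; rewrite qfZ eA eB !qf_congr qV.
  set y := w *m (C *m W).
  apply: (le_trans (lerD (lexx _) (Mle y))).
  have : (S - 1) * sqn y <= (S - 1) * qf V0 y.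
    by apply: ler_wpM2l; rewrite ?subr_ge0.
  move=> h; apply: (le_trans (lerD (lexx _) h)).
  by rewrite mulrBl mul1r addrC subrK.
have [h1 h2] := andP (det_mono sA sSB pA leAB).
by split => //; rewrite -detZ.
Qed.



Lemma unitrow_sq {R : realType} k j : (1 <= j <= k)%N ->
  unitrow R k j *m (unitrow R k j)^T = 1%:M.
Proof.
case/andP=> j1 jk.
have jlt : (j.-1 < k)%N by rewrite prednK.
apply/matrixP => a b; rewrite [a]ord1 [b]ord1 !mxE.
rewrite (bigD1 (Ordinal jlt)) //= big1 ?addr0.
  by rewrite !mxE /= prednK // eqxx mulr1.
move=> c /eqP cne; rewrite !mxE.
have -> : (c.+1 == j) = false.
  apply/negbTE/eqP => e; apply: cne; apply: val_inj => /=; by rewrite -e.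
by rewrite mul0r.
Qed.

Lemma Cmat_sq {R : realType} d k j u : (1 <= j <= k)%N -> (1 <= u <= k)%N ->
  Cmat R d k j u *m (Cmat R d k j u)^T = 3%:M.
Proof.
move=> hj hu; rewrite /Cmat trmx_cast /= -castmx_mul trmx_tens tensmx_mul.
rewrite tr_row_mx tr_row_mx mul_row_col mul_row_col !unitrow_sq // trmx1 mulmx1 trmx1.
have -> : (1%:M + (1%:M + 1%:M) : 'M[R]_1) = 3%:M.
  by apply/matrixP => a b; rewrite [a]ord1 [b]ord1 !mxE /=; ring.
by rewrite tens_scalar_mx castmx_comp castmx_id mul1mx scalemx1.
Qed.

Lemma tensmxDl {R : realType} m n p q (A B : 'M[R]_(m, n)) (D : 'M[R]_(p, q)) :
  (A + B) *t D = A *t D + B *t D.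
Proof. by apply/matrixP => i j; rewrite !mxE mulrDl. Qed.

Lemma tensmxZl {R : realType} m n p q (c : R) (A : 'M[R]_(m, n)) (D : 'M[R]_(p, q)) :
  (c *: A) *t D = c *: (A *t D).
Proof. by apply/matrixP => i j; rewrite !mxE mulrA. Qed.

Lemma tens_scalar11 {R : realType} m n (a : R) :
  (a%:M : 'M[R]_m) *t (1%:M : 'M[R]_n) = a%:M.
Proof.
apply/matrixP => i j.
case: (mxtens_indexP i) => i0 i1; case: (mxtens_indexP j) => j0 j1.
rewrite tensmxE !mxE (inj_eq (can_inj (@mxtens_indexK m n))) xpair_eqE.
by case: (i0 == j0); case: (i1 == j1); rewrite /= ?mulr1n ?mulr0n ?mulr1 ?mulr0.
Qed.

Definition Qbig {R : realType} k (Eu Et : {set 'I_k * 'I_k}) :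
  'M[R]_(1 + (k + k), #|Eu| + #|Et|) :=
  col_mx 0 (block_mx (incidence R Eu) 0 0 (incidence R Et)).

Lemma V0_gram {R : realType} d k (g l : R) (Eu Et : {set 'I_k * 'I_k}) :
  V0 d g l Eu Et = g%:M + l *: ((Qbig Eu Et *t (1%:M : 'M[R]_d))
                                  *m (Qbig Eu Et *t (1%:M : 'M[R]_d))^T).
Proof.
rewrite trmx_tens trmx1 tensmx_mul mul1mx -tensmxZl -[g%:M](tens_scalar11 _ d).
rewrite -tensmxDl /V0; congr (_ *t _).
rewrite /Qbig tr_col_mx mul_col_row tr_block_mx mulmx_block !trmx0 !mulmx0 !mul0mx.
rewrite !addr0 !add0r /laplacian.
rewrite [g%:M in RHS](scalar_mx_block 1 (k + k)) scale_block_mx add_block_mx !scaler0 !addr0 scalar_mx_block scale_block_mx add_block_mx !scaler0 !addr0.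
by [].
Qed.



Lemma count_le_min n m :
  (\sum_(u < n | (0 < u) && (u <= m)) 1 <= minn n.-1 m)%N.
Proof.
elim: n => [|n IH]; first by rewrite big_ord0.
rewrite big_mkcond big_ord_recr /= -big_mkcond.
case: ifP => /= h; last by rewrite addn0 (leq_trans IH) //; lia.
move/andP: h => [h1 h2]; apply: (leq_trans (leq_add IH (leqnn 1))); lia.
Qed.

Lemma tri_sum k : ((\sum_(j < k) (k - j)) * 2 = k * k.+1)%N.
Proof.
elim: k => [|k IH]; first by rewrite big_ord0.
rewrite big_ord_recr /= subSnn.
have -> : (\sum_(j < k) (k.+1 - j) = \sum_(j < k) (k - j) + k)%N.
  have h1 : (\sum_(j < k) 1 = k)%N by rewrite sum1_card card_ord.
  rewrite -[X in (_ + X)%N]h1 -big_split /=.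
  by apply: eq_bigr => j _; rewrite subSn ?addn1 // ltnW.
rewrite !mulnDl IH; lia.
Qed.

Lemma count_pairs k i t : (1 <= i)%N -> (1 <= t)%N -> (i + t - 1 <= k)%N ->
  ((\sum_(j < k.+1) \sum_(u < k.+1 | precedes j u i t) 1) * 2 <= k * k.+1)%N.
Proof.
move=> i1 t1 itk.
have inner : forall j : 'I_k.+1,
   (\sum_(u < k.+1 | precedes j u i t) 1 <= if j == 0 :> nat then 0 else k - j.-1)%N.
  move=> j.
  case: ifP => [/eqP j0|jn0].
    by rewrite big_pred0 // => u; rewrite /precedes j0.
  have : (\sum_(u < k.+1 | precedes j u i t) 1 <=
          \sum_(u < k.+1 | (0 < u) && (u <= k.+1 - j)) 1)%N.
    rewrite [X in (_ <= X)%N]big_mkcond [X in (X <= _)%N]big_mkcond /=.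
    apply: leq_sum => u _; case: ifP => //= /and3P [hj hu hr].
    by rewrite hu /=; case: ifP => //; lia.
  move=> h; apply: (leq_trans h).
  apply: (leq_trans (count_le_min _ _)); lia.
apply: (@leq_trans ((\sum_(j < k.+1) (if j == 0 :> nat then 0 else k - j.-1)) * 2)%N).
  by rewrite leq_mul2r; apply/orP; right; apply: leq_sum => j _; apply: inner.
rewrite big_ord_recl /= add0n.
have -> : (\sum_(j < k) (if lift ord0 j == 0 :> nat then 0 else k - (lift ord0 j).-1)
           = \sum_(j < k) (k - j))%N by apply: eq_bigr => j _.
by rewrite tri_sum.
Qed.



Lemma phi_bound {R : realType} d k j u (x : 'cV[R]_d) :
  (1 <= j <= k)%N -> (1 <= u <= k)%N -> sqnorm x <= 1 ->
  sqn (phi k j u x)^T <= 3.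
Proof.
move=> hj hu hx.
rewrite /sqn /phi trmxK trmx_mul trmxK mulmxA -(mulmxA _ (Cmat R d k j u)) Cmat_sq //.
rewrite mul_mx_scalar -scalemxAl mxE.
have -> : (x^T *m x) 0 0 = sqnorm x.
  by rewrite /sqnorm mxE; apply: eq_bigr => a _; rewrite mxE expr2.
by rewrite -[X in _ <= X]mulr1 ler_wpM2l.
Qed.

Lemma term_bound {R : realType} n (y : 'rV[R]_n) (p : 'cV[R]_n) :
  sqn (y *m p) <= sqn y * sqn p^T.
Proof. by rewrite sqn11 -[p in y *m p]trmxK cauchy_schwarz. Qed.

Theorem lemmaE11 (R : realType) (d k i t : nat) (gamma lambda : R)
  (Eu Et : {set 'I_k * 'I_k})
  (x : nat -> nat -> 'cV[R]_d) (pi : nat -> nat -> R) :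
  (1 <= d)%N -> (1 <= k)%N -> (1 <= i)%N -> (1 <= t)%N -> (i + t - 1 <= k)%N ->
  0 <= lambda -> 1 <= gamma ->
  simple_edges Eu -> simple_edges Et ->
  (forall j u, precedes j u i t -> sqnorm (x j u) <= 1) ->
  (forall j u, precedes j u i t -> 0 < pi j u < 1) ->
  ln (\det (invmx (Vund gamma lambda Eu Et x pi i t))
      / \det (Lambda0 gamma lambda Eu Et x pi i t))
  <= (2 * d)%:R *
     ln ((3 * k * (k + 1))%:R / 8 + gamma * k%:R
         + 2 * lambda * (#|Eu| + #|Et|)%:R).
Proof.
move=> d1 k1 i1 t1 itk l0 g1 _ _ hx hpi.
rewrite /Vund /Lambda0 /Vit invmxK.
set S := (_ / 8 + _ + _).
set V0m := V0 d gamma lambda Eu Et.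
set Msum := (\sum_(j < k.+1) _).
have hik : (1 <= i <= k)%N by lia.
have htk : (1 <= t <= k)%N by lia.
set cnt := (\sum_(j < k.+1) \sum_(u < k.+1 | precedes j u i t) 1)%N.
have hc : (cnt%:R * 2 <= (k * k.+1)%:R :> R).
  by rewrite -natrM ler_nat count_pairs.
have hS1 : 3 / 8 * (k * k.+1)%:R <= S - 1.
  have gk : 1 <= gamma * k%:R.
    have : 1 <= k%:R :> R by rewrite ler1n.
    move=> h; nra.
  have le0 : 0 <= 2 * lambda * (#|Eu| + #|Et|)%:R by rewrite !mulr_ge0.
  have eS : (3 * k * (k + 1))%:R / 8 = 3 / 8 * (k * k.+1)%:R :> R.
    by rewrite -mulnA natrM addn1 mulrAC mulrC.
  rewrite /S eS; move: le0; move: (2 * lambda * _) => ee; move: (gamma * k%:R) gk => gg.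
  move: (3 / 8 * _) => K; lra.
have S1 : 1 <= S.
  have : 0 <= 3 / 8 * (k * k.+1)%:R :> R by rewrite mulr_ge0 ?ler0n ?divr_ge0.
  move: hS1; move: (3 / 8 * _) => K; lra.
have prec_b : forall j u, precedes j u i t -> (1 <= j <= k)%N /\ (1 <= u <= k)%N.
  move=> j u /and3P [hj hu hr]; move: hr => /orP [h|/andP [/eqP h _]]; lia.
have sV0 : V0m^T = V0m.
  by rewrite /V0m V0_gram linearD linearZ /= tr_scalar_mx trmx_mul trmxK.
have sM : Msum^T = Msum.
  rewrite /Msum raddf_sum; apply: eq_bigr => j _; rewrite raddf_sum.
  by apply: eq_bigr => u _; apply/matrixP => a b; rewrite !mxE; congr (_ * _); apply: eq_bigr => c _; rewrite !mxE mulrC.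
have V0ge : forall y, sqn y <= qf V0m y.
  move=> y; rewrite /V0m V0_gram qfD qf_scalar qfZ qf_gram.
  have := sqn_ge0 y; have := sqn_ge0 (y *m (Qbig Eu Et *t (1%:M : 'M[R]_d))).
  move: (sqn y) (sqn _) => a0 b0 ha hb; nra.
have qM : forall y, qf Msum y = \sum_(j < k.+1) \sum_(u < k.+1 | precedes j u i t)
     (pi j u * (1 - pi j u)) * sqn (y *m phi k j u (x j u)).
  move=> y; rewrite /Msum qf_sum; apply: eq_bigr => j _; rewrite qf_sum.
  by apply: eq_bigr => u _; rewrite qfZ qf_gram.
have Mge0 : forall y, 0 <= qf Msum y.
  move=> y; rewrite qM; apply: sumr_ge0 => j _; apply: sumr_ge0 => u hp.
  have [p0 p1] := andP (hpi _ _ hp).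
  by rewrite mulr_ge0 ?sqn_ge0 // mulr_ge0 ?subr_ge0 // ltW.
have Mle : forall y, qf Msum y <= (S - 1) * sqn y.
  move=> y; rewrite qM.
  apply: (@le_trans _ _ (\sum_(j < k.+1) \sum_(u < k.+1 | precedes j u i t)
                         (3 / 4 * sqn y))).
    apply: ler_sum => j _; apply: ler_sum => u hp.
    have [p0 p1] := andP (hpi _ _ hp).
    have [hj hu] := prec_b _ _ hp.
    have hph := phi_bound hj hu (hx _ _ hp).
    have ht := term_bound y (phi k j u (x j u)).
    have sy := sqn_ge0 y; have sz := sqn_ge0 (y *m phi k j u (x j u)).
    move: ht hph sy sz; move: (sqn (y *m _)) (sqn (phi _ _ _ _)^T) (sqn y) => a b c ht hph sy sz.
    move: p0 p1; move: (pi j u) => p p0 p1.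
    have h1 : a <= 3 * c by apply: (le_trans ht); rewrite mulrC ler_wpM2r.
    have h2 : p * (1 - p) <= 1 / 4.
      by rewrite -subr_ge0 (_ : _ - _ = (p - 1 / 2) ^+ 2) ?sqr_ge0 //; field.
    have h3 : 0 <= p * (1 - p) by nra.
    nra.
  have -> : \sum_(j < k.+1) \sum_(u < k.+1 | precedes j u i t) (3 / 4 * sqn y)
            = 3 / 4 * sqn y * cnt%:R.
    rewrite /cnt natr_sum mulr_sumr; apply: eq_bigr => j _.
    by rewrite natr_sum mulr_sumr; apply: eq_bigr => u _; rewrite mulr1.
  have := sqn_ge0 y; move: hc hS1; move: (sqn y) (cnt%:R : R) ((k * k.+1)%:R : R).
  move=> a b c; nra.
have Cinj : forall w : 'rV[R]_d, w *m Cmat R d k i t = 0 -> w = 0.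
  move=> w h; have := congr1 (mulmx^~ (Cmat R d k i t)^T) h.
  rewrite mul0mx -mulmxA Cmat_sq // mul_mx_scalar => /eqP.
  by rewrite scaler_eq0 pnatr_eq0 /= => /eqP.
have [dA dle] := main_abstract sV0 sM V0ge Mge0 Mle S1 Cinj.
set A := \det (Cmat R d k i t *m _ *m _) in dA dle *.
set B := \det _ in dle *.
have Spos : 0 < S by apply: lt_le_trans S1.
have SD : 0 < S ^+ d by rewrite exprn_gt0.
have Bpos : 0 < B by rewrite -(pmulr_rgt0 _ SD) (lt_le_trans dA dle).
have r : A / B <= S ^+ d by rewrite ler_pdivrMr.
apply: (@le_trans _ _ (ln (S ^+ d))).
  by rewrite ler_ln ?posrE ?divr_gt0.
rewrite lnXn // -[ln S *+ d]mulr_natl; apply: (ler_wpM2r (ln_ge0 S1)).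
by rewrite ler_nat; lia.
Qed.
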